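(* For each $k\in\mathbb N$, the ordinal $\omega^{\omega^k}$ (as the linear ordering $(\omega^{\omega^k};\le)$) admits a tree-automatic presentation over a unary alphabet $\Sigma$, i.e. with all universe trees being $\Sigma$-trees for some one-letter alphabet $\Sigma$.
   Context: A $\Sigma$-tree is a map $t:D\to\Sigma$ where $D$ is a finite prefix-closed subset of $\{0,1\}^*$. A tree automaton is deterministic bottom-up: $(Q,\iota,\delta:\Sigma\times Q\times Q\to Q,F)$, with missing children assigned state $\iota$ and acceptance determined by the root state. The convolution of trees $t_1,\dots,t_n$ is the tree on $\bigcup_i\mathrm{dom}(t_i)$ labelled by tuples, padding with a fresh symbol $\Box$ where a $t_i$ is undefined. A tree-automatic presentation of a structure $(A;\le)$ consists of tree automata $\mathcal A$, $\mathcal A_\le$ and a bijection $\mu:A\to L(\mathcal A)$ such that $\mathcal A_\le$ accepts exactly the convolutions $\otimes(\mu(a),\mu(b))$ with $a\le b$. *)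

(* Defs.v *)
From mathcomp Require Import all_boot.
Set Implicit Arguments. Unset Strict Implicit. Unset Printing Implicit Defensive.

(* ---------- Finite labelled binary trees ----------
   A Sigma-tree t : D -> Sigma, D a finite prefix-closed subset of {0,1}^*,
   is represented canonically: [Leaf] is the tree with empty domain, and
   [Node a l r] has root (epsilon) labelled a, with 0-subtree l, 1-subtree r. *)
Inductive tree (S : Type) : Type :=
| Leaf : tree S
| Node : S -> tree S -> tree S -> tree S.
Arguments Leaf {S}.

Record automaton (S : Type) := Automaton {
  aQ : finType;
  aiota : aQ;
  adelta : S -> aQ -> aQ -> aQ;
  aF : pred aQ }.

(* run: missing children receive state iota *)
Fixpoint run S (A : automaton S) (t : tree S) : @aQ S A :=
  match t with
  | Leaf => @aiota S A
  | Node a l r => @adelta S A a (run A l) (run A r)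
  end.

Definition accepts S (A : automaton S) (t : tree S) : bool := @aF S A (run A t).

(* Convolution of two trees, padding symbol Box represented by None. *)
Fixpoint pad1 S1 S2 (t : tree S1) : tree (option S1 * option S2) :=
  match t with
  | Leaf => Leaf
  | Node a l r => Node (Some a, None) (pad1 S2 l) (pad1 S2 r)
  end.
Fixpoint pad2 S1 S2 (t : tree S2) : tree (option S1 * option S2) :=
  match t with
  | Leaf => Leaf
  | Node b l r => Node (None, Some b) (pad2 S1 l) (pad2 S1 r)
  end.
Fixpoint conv S1 S2 (t1 : tree S1) (t2 : tree S2) : tree (option S1 * option S2) :=
  match t1, t2 with
  | Leaf, _ => pad2 S1 t2
  | Node a l r, Leaf => pad1 S2 t1
  | Node a l r, Node b l' r' => Node (Some a, Some b) (conv l l') (conv r r')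
  end.

(* ---------- Ordinals below epsilon_0 in Cantor normal form ----------
   [Zero] = 0 ;  [Cons a n b] = omega^a * (n+1) + b. *)
Inductive cnf : Type :=
| Zero : cnf
| Cons : cnf -> nat -> cnf -> cnf.

Fixpoint cmp (x y : cnf) : comparison :=
  match x, y with
  | Zero, Zero => Eq
  | Zero, Cons _ _ _ => Lt
  | Cons _ _ _, Zero => Gt
  | Cons a n b, Cons a' n' b' =>
      match cmp a a' with
      | Lt => Lt
      | Gt => Gt
      | Eq => match Nat.compare n n' with
              | Lt => Lt
              | Gt => Gt
              | Eq => cmp b b'
              end
      end
  end.

Definition ltb (x y : cnf) : bool := if cmp x y is Lt then true else false.

Fixpoint nf (x : cnf) : bool :=
  match x with
  | Zero => true
  | Cons a n b =>
      nf a && nf b &&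
      (match b with Zero => true | Cons a' _ _ => ltb a' a end)
  end.

Definition ofnat (k : nat) : cnf :=
  match k with 0 => Zero | S m => Cons Zero m Zero end.

Definition omega_pow (x : cnf) : cnf := Cons x 0 Zero.

Definition omega_omega_k (k : nat) : cnf := omega_pow (omega_pow (ofnat k)).

Definition ord_below (alpha : cnf) : Type := {x : cnf | nf x && ltb x alpha}.

Definition ord_le (alpha : cnf) (x y : ord_below alpha) : Prop :=
  cmp (proj1_sig x) (proj1_sig y) <> Gt.

Definition tree_automatic_presentation (S : finType) (A : Type) (le : A -> A -> Prop) : Prop :=
  exists (AU : automaton S) (ALE : automaton (option S * option S)) (mu : A -> tree S),
    [/\ injective mu,
        (forall a, accepts AU (mu a)),
        (forall t, accepts AU t -> exists a, mu a = t) &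
        (forall a b, accepts ALE (conv (mu a) (mu b)) <-> le a b)].

(* Main.v *)
From Stdlib Require Import PeanoNat Lia ClassicalEpsilon.
From mathcomp Require Import all_boot.
Require Import Defs.
Set Implicit Arguments. Unset Strict Implicit. Unset Printing Implicit Defensive.

Lemma cmp_refl x : cmp x x = Eq.
Proof. elim: x => //= a IHa n b IHb. by rewrite IHa Nat.compare_refl IHb. Qed.

Lemma cmp_eq x y : cmp x y = Eq -> x = y.
Proof.
elim: x y => [|a IHa n b IHb] [|a' n' b'] //=.
case E: (cmp a a') => //; case En: (Nat.compare n n') => // Eb.
by rewrite (IHa _ E) (IHb _ Eb) (proj1 (Nat.compare_eq_iff _ _) En).
Qed.

Lemma cmp_sym x y : cmp y x = CompOpp (cmp x y).
Proof.
elim: x y => [|a IHa n b IHb] [|a' n' b'] //=.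
rewrite IHa Nat.compare_antisym IHb.
by case: (cmp a a'); case: (Nat.compare n n').
Qed.

Lemma cmp_trans x y z : cmp x y = Lt -> cmp y z = Lt -> cmp x z = Lt.
Proof.
elim: x y z => [|a IHa n b IHb] [|a' n' b'] [|a'' n'' b''] //=.
case E1: (cmp a a') => //; case E2: (cmp a' a'') => //.
- move: E1 E2 => /cmp_eq -> /cmp_eq ->; rewrite cmp_refl.
  case N1: (Nat.compare n n') => //; case N2: (Nat.compare n' n'') => //.
  + move: N1 N2 => /Nat.compare_eq_iff -> /Nat.compare_eq_iff ->.
    rewrite Nat.compare_refl; exact: IHb.
  + move: N1 => /Nat.compare_eq_iff -> _ _; by rewrite N2.
  + move: N2 => /Nat.compare_eq_iff <- _ _; by rewrite N1.
  + move: N1 N2 => /Nat.compare_lt_iff N1 /Nat.compare_lt_iff N2 _ _.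
    have -> : Nat.compare n n'' = Lt by apply/Nat.compare_lt_iff; lia.
    done.
- move: E1 => /cmp_eq ->; by rewrite E2.
- move: E2 => /cmp_eq <-; by rewrite E1.
- by rewrite (IHa _ _ E1 E2).
Qed.

Definition headlt (b a : cnf) := match b with Zero => true | Cons a' _ _ => ltb a' a end.
Definition ltp a e := ltb e (omega_pow a).

Lemma ltpE a e : ltp a e = headlt e a.
Proof.
case: e => // a' n b. rewrite /ltp /headlt /ltb /omega_pow /=.
case: (cmp a' a) => //. case: n => [|n] //=. by case: b.
Qed.

Lemma ltb0 x : ltb x Zero = false. Proof. by case: x. Qed.

Lemma ofnat_cmp m n : cmp (ofnat m) (ofnat n) = Nat.compare m n.
Proof. case: m n => [|m] [|n] //=. by case: (Nat.compare m n). Qed.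

Lemma ltbP x y : ltb x y <-> cmp x y = Lt.
Proof. rewrite /ltb; by case: (cmp x y). Qed.

Fixpoint app x y := match x with Zero => y | Cons a n b => Cons a n (app b y) end.
Fixpoint mapexp (f : cnf -> cnf) x :=
  match x with Zero => Zero | Cons a n b => Cons (f a) n (mapexp f b) end.
Fixpoint allexp (P : cnf -> bool) x :=
  match x with Zero => true | Cons a _ b => P a && allexp P b end.

Lemma allexp_app P x y : allexp P (app x y) = allexp P x && allexp P y.
Proof. elim: x => //= a _ n b ->; by rewrite andbA. Qed.
Lemma allexp_map P f x : allexp P (mapexp f x) = allexp (fun e => P (f e)) x.
Proof. by elim: x => //= a _ n b ->. Qed.
Lemma allexp_impl (P Q : cnf -> bool) x : (forall e, P e -> Q e) -> allexp P x -> allexp Q x.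
Proof. move=> H; elim: x => //= a _ n b IH /andP[/H -> /IH] //. Qed.
Lemma allexp_and P Q x : allexp (fun e => P e && Q e) x = allexp P x && allexp Q x.
Proof.
elim: x => //= a _ n b ->.
by case: (P a); case: (Q a); case: (allexp P b); case: (allexp Q b).
Qed.
Lemma nf_allexp x : nf x -> allexp nf x.
Proof. elim: x => //= a _ n b IH /andP[/andP[-> /IH ->]] //. Qed.

Lemma nfC a n b : nf (Cons a n b) = nf a && nf b && headlt b a.
Proof. by []. Qed.

Lemma nf_app x y : nf x -> nf y ->
  allexp (fun u => allexp (fun l => ltb l u) y) x -> nf (app x y).
Proof.
elim: x => //= a _ n b IH /andP[/andP[-> nb] hb] ny /andP[hy hb'].
rewrite IH //=. case: b {nb IH hb'} hb => //=. by case: y ny hy => //= l m c _ /andP[].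
Qed.

Lemma cmp0x x : x <> Zero -> cmp Zero x = Lt.
Proof. by case: x. Qed.
Lemma cmpx0 x : x <> Zero -> cmp x Zero = Gt.
Proof. by case: x. Qed.

Lemma cmp_app A A' B B' (PA PB : cnf -> bool) :
  allexp PA A -> allexp PA A' -> allexp PB B -> allexp PB B' ->
  (forall u l, PA u -> PB l -> cmp l u = Lt) ->
  cmp (app A B) (app A' B') = match cmp A A' with Eq => cmp B B' | c => c end.
Proof.
move=> + + + + H.
elim: A A' => [|a _ n b IH] [|a' n' b'] //=.
- move=> _ /andP[ha _]; case: B => //= l m c /andP[hl _] _.
  by rewrite (H _ _ ha hl).
- move=> /andP[ha _] _ _; clear IH; case: B' => //= l m c /andP[hl _].
  by rewrite cmp_sym (H _ _ ha hl).
- move=> /andP[_ hb] /andP[_ hb'] hB hB'.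
  rewrite (IH b') //.
  case: (cmp a a') => //; case: (Nat.compare n n') => //.
Qed.

Definition sh j i e := if i is i'.+1 then Cons (ofnat j) i' e else e.
Definition unsh (i : nat) e := if i is _.+1 then (if e is Cons _ _ r then r else Zero) else e.

Lemma cmp_sh j i e e' : cmp (sh j i e) (sh j i e') = cmp e e'.
Proof. case: i => //= i. by rewrite cmp_refl Nat.compare_refl. Qed.

Lemma cmp_map j i x y : cmp (mapexp (sh j i) x) (mapexp (sh j i) y) = cmp x y.
Proof. elim: x y => [|a _ n b IH] [|a' n' b'] //=. by rewrite cmp_sh IH. Qed.

Definition idx j e := if e is Cons a m _ then (if cmp a (ofnat j) is Eq then m.+1 else 0) else 0.
Definition isEq c := if c is Eq then true else false.
Definition form j e := if e is Cons a m r then (isEq (cmp a (ofnat j)) && ltp (ofnat j) r) || ltb a (ofnat j) else true.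

Lemma idx_lt j e' e : form j e' -> form j e -> idx j e' < idx j e -> cmp e' e = Lt.
Proof.
case: e => [|a m r] /=; first by rewrite ltn0.
move=> fe' _; case Ea: (cmp a (ofnat j)) => //=. move: Ea => /cmp_eq ->.
case: e' fe' => [|a' m' r'] //=.
case Ea': (cmp a' (ofnat j)) => /=.
- move: Ea' => /cmp_eq -> _; rewrite ?cmp_refl ltnS => H.
  by have -> : Nat.compare m' m = Lt by apply/Nat.compare_lt_iff; apply/ltP.
- by [].
- by rewrite /ltb Ea'.
Qed.

Lemma idx_mono j e' e : form j e' -> form j e -> ltb e' e -> idx j e' <= idx j e.
Proof.
move=> f' f; rewrite leqNgt; apply: contraL => /(idx_lt f f') H.
by rewrite /ltb cmp_sym H.
Qed.

Definition isLeaf (t : tree unit) := if t is Leaf then true else false.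

Fixpoint valid (t : tree unit) (j : nat) : bool :=
  match t with
  | Leaf => true
  | Node _ l r => valid r j &&
      (if j is j'.+1 then valid l j' && (isLeaf r ==> ~~ isLeaf l) else isLeaf l)
  end.

Fixpoint len (t : tree unit) : nat := if t is Node _ _ r then (len r).+1 else 0.
Fixpoint semS (sg : tree unit -> cnf) j t i :=
  match t with Leaf => Zero | Node _ l r => app (semS sg j r i.+1) (mapexp (sh j i) (sg l)) end.
Fixpoint sem j t := if j is j'.+1 then semS (sem j') j' t 0 else ofnat (len t).

Definition Lv j x := nf x && allexp (ltp (ofnat j)) x.

Lemma sh_ok j i e : ltp (ofnat j) e -> (idx j (sh j i e) == i) && form j (sh j i e).
Proof.
case: i => [|i] /=.
- rewrite ltpE; case: e => //= a m r; rewrite /headlt /ltb.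
  by case E: (cmp a (ofnat j)) => //=; rewrite /ltb E.
- by move=> h; rewrite cmp_refl eqxx h.
Qed.

Lemma nf_ofnat j : nf (ofnat j). Proof. by case: j. Qed.

Lemma nf_map j i y : nf y -> allexp (ltp (ofnat j)) y -> nf (mapexp (sh j i) y).
Proof.
elim: y => //= a _ n b IH /andP[/andP[na nb] hb] /andP[la lb].
rewrite IH // andbT. apply/andP; split.
- case: i {IH} => //= i. move: la; rewrite ltpE /headlt => la. by rewrite nf_ofnat na la.
- case: b {IH nb lb} hb => //= a' n' b'. by rewrite /ltb cmp_sh.
Qed.

Lemma allexp2 (PA PB : cnf -> bool) A B : allexp PA A -> allexp PB B ->
  (forall u l, PA u -> PB l -> ltb l u) ->
  allexp (fun u => allexp (fun l => ltb l u) B) A.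
Proof.
move=> hA hB H; apply: allexp_impl hA => u hu.
apply: allexp_impl hB => l hl; exact: H.
Qed.

Lemma app_nz A B : app A B = Zero -> A = Zero /\ B = Zero.
Proof. by case: A. Qed.
Lemma map_nz f y : mapexp f y = Zero -> y = Zero.
Proof. by case: y. Qed.

Lemma form_ltp j e : form j e -> ltp (ofnat j.+1) e.
Proof.
rewrite ltpE; case: e => // a m r; rewrite /form /headlt => /orP[/andP[]|].
- rewrite /isEq; case E: (cmp a (ofnat j)) => // _.
  move: E => /cmp_eq ->. rewrite /ltb ofnat_cmp.
  by have -> : Nat.compare j j.+1 = Lt by apply/Nat.compare_lt_iff; lia.
- move=> /ltbP h; apply/ltbP; apply: (cmp_trans h).
  rewrite ofnat_cmp; apply/Nat.compare_lt_iff; lia.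
Qed.

Section Spine.
Variable j : nat.
Hypothesis IHg : forall g, valid g j -> Lv j (sem j g) /\ (g <> Leaf -> sem j g <> Zero).

Lemma semS_ok t i : valid t j.+1 ->
  [/\ nf (semS (sem j) j t i),
      allexp (fun e => (i <= idx j e) && form j e) (semS (sem j) j t i) &
      (t <> Leaf -> semS (sem j) j t i <> Zero)].
Proof.
elim: t i => [|u g _ r IH] i //=.
move=> /andP[vr /andP[vg hl]].
have [nA aA zA] := IH i.+1 vr.
have [/andP[ng lg] zg] := IHg vg.
have nB := nf_map i ng lg.
have aB : allexp (fun e => (idx j e == i) && form j e) (mapexp (sh j i) (sem j g)).
  by rewrite allexp_map; apply: allexp_impl lg => e /sh_ok.
split.
- apply: nf_app => //. apply: (allexp2 aA aB) => x l /andP[h1 h2] /andP[/eqP h3 h4].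
  apply/ltbP; apply: (idx_lt (j:=j)) => //; by rewrite h3.
- rewrite allexp_app; apply/andP; split.
  + apply: allexp_impl aA => e /andP[h1 ->]; rewrite andbT; exact: ltnW.
  + apply: allexp_impl aB => e /andP[/eqP -> ->]; by rewrite leqnn.
- move=> _ /app_nz [hA /map_nz hB].
  case E: (isLeaf r) hl => /= hl.
  + by apply: zg hB => Eg; rewrite Eg in hl.
  + by apply: zA hA => Er; rewrite Er in E.
Qed.
End Spine.

Lemma sem_ok j t : valid t j -> Lv j (sem j t) /\ (t <> Leaf -> sem j t <> Zero).
Proof.
elim: j t => [|j IH] t.
- move=> _; split; last by case: t.
  rewrite /Lv /=; case: (len t) => //.
- move=> v; have [n a z] := semS_ok IH 0 v.
  split => //=. rewrite /Lv n /=. apply: allexp_impl a => e /andP[_]; exact: form_ltp.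
Qed.

Fixpoint cmpT (s t : tree unit) : comparison :=
  match s, t with
  | Leaf, Leaf => Eq
  | Leaf, Node _ _ _ => Lt
  | Node _ _ _, Leaf => Gt
  | Node _ l r, Node _ l' r' => match cmpT r r' with Eq => cmpT l l' | c => c end
  end.

Lemma cmpT_eq s t : cmpT s t = Eq -> s = t.
Proof.
elim: s t => [|u l IHl r IHr] [|u' l' r'] //=.
case E: (cmpT r r') => // El. by case: u; case: u'; rewrite (IHl _ El) (IHr _ E).
Qed.

Lemma map_all j i y : Lv j y -> allexp (fun e => (idx j e == i) && form j e) (mapexp (sh j i) y).
Proof. move=> /andP[_ lg]; rewrite allexp_map; apply: allexp_impl lg => e /sh_ok. by []. Qed.

Lemma len_cmp s t : valid s 0 -> valid t 0 -> Nat.compare (len s) (len t) = cmpT s t.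
Proof.
elim: s t => [|u l _ r IH] [|u' l' r'] //= /andP[vr hl] /andP[vr' hl'].
rewrite IH //. by case: l hl; case: l' hl'; case: (cmpT r r').
Qed.

Lemma sem_cmp j s t : valid s j -> valid t j -> cmp (sem j s) (sem j t) = cmpT s t.
Proof.
elim: j s t => [|j IHj] s t.
- by move=> vs vt /=; rewrite ofnat_cmp len_cmp.
- rewrite /=. move: 0 => i.
  elim: s t i => [|u g _ r IH] [|u' g' r'] i //=.
  + move=> _ v; have [_ _ z] := semS_ok (fun g v => sem_ok v) i (v : valid (Node u' g' r') j.+1).
    have := z ltac:(discriminate) => /=. by case: (app _ _).
  + move=> v _; have [_ _ z] := semS_ok (fun g v => sem_ok v) i (v : valid (Node u g r) j.+1).
    have := z ltac:(discriminate) => /=. by case: (app _ _).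
  + move=> v v'.
    have [_ aA _] := semS_ok (fun g v => sem_ok v) i.+1 (proj1 (andP v)).
    have [_ aA' _] := semS_ok (fun g v => sem_ok v) i.+1 (proj1 (andP v')).
    move: v v' => /andP[vr /andP[vg _]] /andP[vr' /andP[vg' _]].
    have [lg _] := sem_ok vg; have [lg' _] := sem_ok vg'.
    rewrite (cmp_app aA aA' (map_all i lg) (map_all i lg')).
    * by rewrite IH // cmp_map IHj.
    * move=> x l /andP[h1 h2] /andP[/eqP h3 h4].
      apply: (idx_lt (j:=j)) => //; by rewrite h3.
Qed.

Fixpoint takeW (p : cnf -> bool) x :=
  match x with Zero => Zero | Cons a n b => if p a then Cons a n (takeW p b) else Zero end.
Fixpoint dropW (p : cnf -> bool) x :=
  match x with Zero => Zero | Cons a n b => if p a then dropW p b else x end.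

Lemma app_take_drop p x : app (takeW p x) (dropW p x) = x.
Proof. elim: x => //= a _ n b IH. by case: (p a) => //=; rewrite IH. Qed.

Lemma nf_take p x : nf x -> nf (takeW p x).
Proof.
elim: x => //= a _ n b IH /andP[/andP[na nb] hb].
case: (p a) => //=. rewrite na IH //=.
case: b hb {IH nb} => //= a' n' b' h. by case: (p a').
Qed.

Lemma nf_drop p x : nf x -> nf (dropW p x).
Proof.
elim: x => //= a _ n b IH /andP[/andP[na nb] hb].
case: (p a) => //=; first exact: IH. by rewrite na nb.
Qed.

Lemma all_take P p x : allexp P x -> allexp (fun e => P e && p e) (takeW p x).
Proof. elim: x => //= a _ n b IH /andP[pa pb]. case E: (p a) => //=. by rewrite pa E IH. Qed.

Lemma all_drop P p x : allexp P x -> allexp P (dropW p x).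
Proof. elim: x => //= a _ n b IH /andP[pa pb]. case: (p a) => //=; first exact: IH. by rewrite pa. Qed.

Lemma drop_head p x : match dropW p x with Zero => true | Cons a _ _ => ~~ p a end.
Proof. elim: x => //= a _ n b IH. case E: (p a) => //=. by rewrite E. Qed.

Lemma idx_le_all j i x : nf x -> allexp (form j) x ->
  (match x with Zero => true | Cons a _ _ => idx j a <= i end) ->
  allexp (fun e => idx j e <= i) x.
Proof.
elim: x => //= a _ n b IH /andP[/andP[na nb] hb] /andP[fa fb] ha.
rewrite ha IH //. case: b hb fb {IH nb} => //= a' n' b' h /andP[fa' _].
exact: leq_trans (idx_mono fa' fa h) ha.
Qed.

Lemma idxS j e i : idx j e = i.+1 -> e = Cons (ofnat j) i (unsh 1 e).
Proof.
case: e => //= a m r; case E: (cmp a (ofnat j)) => //; case=> <-.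
by rewrite (cmp_eq E).
Qed.

Lemma sh_unsh j i e : (idx j e == i) && form j e -> sh j i (unsh i e) = e.
Proof.
case: i => [|i] //= /andP[/eqP /idxS E _]. by rewrite {2}E.
Qed.

Lemma map_sh_unsh j i B : allexp (fun e => (idx j e == i) && form j e) B ->
  mapexp (sh j i) (mapexp (unsh i) B) = B.
Proof. elim: B => //= a _ n b IH /andP[ha hb]. by rewrite sh_unsh // IH. Qed.

Lemma unsh_ltp j i e : (idx j e == i) && form j e -> ltp (ofnat j) (unsh i e).
Proof.
rewrite ltpE; case: i => [|i] /=.
- case: e => //= a m r. rewrite /isEq /headlt. case: (cmp a (ofnat j)) => //=.
- move=> /andP[/eqP E f]. move: f; rewrite (idxS E) /= cmp_refl /= -ltpE.
  by rewrite /ltb cmp_refl orbF.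
Qed.

Lemma unsh_nf i e : nf e -> nf (unsh i e).
Proof. case: i => //= _; case: e => //= a m r /andP[/andP[_ ->]] //. Qed.

Lemma unsh_lt j i e2 e1 : (idx j e2 == i) && form j e2 -> (idx j e1 == i) && form j e1 ->
  ltb e2 e1 -> ltb (unsh i e2) (unsh i e1).
Proof.
case: i => [|i] //= /andP[/eqP E2 _] /andP[/eqP E1 _].
rewrite (idxS E2) (idxS E1) /ltb /= cmp_refl Nat.compare_refl. by [].
Qed.

Lemma Lv_unsh j i B : nf B -> allexp (fun e => (idx j e == i) && form j e) B ->
  Lv j (mapexp (unsh i) B).
Proof.
move=> nB aB; apply/andP; split; last first.
  rewrite allexp_map; apply: allexp_impl aB => e; exact: unsh_ltp.
elim: B nB aB => //= a _ n b IH /andP[/andP[na nb] hb] /andP[ha hbs].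
rewrite unsh_nf // IH //=.
case: b hb hbs {IH nb} => //= a' n' b' h /andP[ha' _].
exact: unsh_lt ha' ha h.
Qed.

Lemma sem_leaf j : sem j Leaf = Zero. Proof. by case: j. Qed.

Section Build.
Variable j : nat.
Hypothesis IHj : forall c, Lv j c -> exists g, valid g j /\ sem j g = c.

Lemma build n : forall i y, nf y ->
  allexp (fun e => (i <= idx j e) && (idx j e < i + n) && form j e) y ->
  exists t, valid t j.+1 /\ semS (sem j) j t i = y.
Proof.
elim: n => [|n IHn] i y ny hy.
- exists Leaf; split => //. case: y ny hy => //= a m b _ /andP[/andP[/andP[h1 h2] _] _].
  by rewrite addn0 ltnNge h1 in h2.
- case: y ny hy => [|a0 m0 b0] ny hy; first by exists Leaf.
  set y := Cons a0 m0 b0 in ny hy *.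
  set p := fun e => i < idx j e.
  have hA : allexp (fun e => (i.+1 <= idx j e) && (idx j e < i.+1 + n) && form j e) (takeW p y).
    apply: allexp_impl (all_take p hy) => e /andP[/andP[/andP[_ h2] h3] h4].
    by move: h4; rewrite /p => h4; rewrite h4 addSnnS h2 h3.
  have [tr [vr er]] := IHn i.+1 _ (nf_take p ny) hA.
  have nB := nf_drop p ny.
  have aB0 := all_drop p hy.
  have aB : allexp (fun e => (idx j e == i) && form j e) (dropW p y).
    have fB : allexp (form j) (dropW p y).
      by apply: allexp_impl aB0 => e /andP[_ ->].
    have H' : allexp (fun e => idx j e <= i) (dropW p y).
      apply: (idx_le_all (i:=i) nB fB). move: (drop_head p y); case: (dropW p y) => //= a _ _.
      by rewrite /p -leqNgt.
    have := allexp_and (fun e => (i <= idx j e) && (idx j e < i + n.+1) && form j e)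
       (fun e => idx j e <= i) (dropW p y).
    rewrite aB0 H' /= => HH.
    apply: allexp_impl (HH) => e /andP[/andP[/andP[h1 _] h3] h4].
    by rewrite eqn_leq h4 h1 h3.
  have [g [vg eg]] := IHj (Lv_unsh nB aB).
  exists (Node tt g tr); split.
  + rewrite /= vr vg /=. apply/implyP => Ltr. apply/negP => Lg.
    have Etr : tr = Leaf by case: tr Ltr {vr er}.
    have Eg : g = Leaf by case: g Lg {vg eg}.
    rewrite Etr in er. rewrite Eg sem_leaf in eg.
    have EB := map_sh_unsh aB; rewrite -eg in EB.
    have := app_take_drop p y. rewrite -er -EB. by [].
  + by rewrite /= er eg map_sh_unsh // app_take_drop.
Qed.
End Build.

Fixpoint spine n : tree unit := if n is m.+1 then Node tt Leaf (spine m) else Leaf.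

Lemma nf_lt_ofnat a n : nf a -> ltb a (ofnat n) -> exists j', j' < n /\ a = ofnat j'.
Proof.
case: a => [|a1 m b1].
- case: n => // n _ _; by exists 0.
- case: n => [|n] /=; first by rewrite ltb0.
  move=> nfa; rewrite /ltb /=.
  case: a1 nfa => [|a2 m2 b2] nfa //=.
  move: nfa => /andP[_ hb]. case: b1 hb => [|a3 m3 b3] /=; last by rewrite ltb0.
  move=> _. case E: (Nat.compare m n) => // _.
  exists m.+1; split => //. move: E => /Nat.compare_lt_iff /ltP. by [].
Qed.

Lemma ltp_form j e : nf e -> ltp (ofnat j.+1) e -> form j e.
Proof.
rewrite ltpE; case: e => // a m r. rewrite nfC /headlt => /andP[/andP[na _] hr] h.
have [j' [lj Ea]] := nf_lt_ofnat na h. subst a.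
rewrite /form. move: lj; rewrite ltnS leq_eqVlt => /orP[/eqP Ej|lj].
- subst j'. rewrite cmp_refl ltpE; apply/orP; left; exact: hr.
- apply/orP; right. rewrite /ltb ofnat_cmp.
  by have -> : Nat.compare j' j = Lt by apply/Nat.compare_lt_iff; apply/ltP.
Qed.

Fixpoint bnd j x := if x is Cons a _ b then maxn (idx j a).+1 (bnd j b) else 0.

Lemma bnd_ok j x : allexp (fun e => idx j e < bnd j x) x.
Proof.
elim: x => //= a _ n b IH. rewrite leq_maxl /=.
apply: allexp_impl IH => e h. apply: leq_trans h _. exact: leq_maxr.
Qed.

Lemma sem_surj j x : Lv j x -> exists t, valid t j /\ sem j t = x.
Proof.
elim: j x => [|j IHj] x.
- case: x => [|a n b]; first by exists Leaf.
  rewrite /Lv /= => /andP[/andP[/andP[_ _] hb] /andP[ha _]].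
  move: ha; rewrite ltpE /headlt. case: a hb => [|a1 m1 b1]; last by rewrite ltb0.
  case: b => [|a2 m2 b2] /=; last by rewrite ltb0.
  move=> _ _; exists (spine n.+1); split.
  + by elim: n.+1 => //= k ->.
  + rewrite /=. have -> : len (spine n) = n by elim: n => //= n ->. by [].
- move=> /andP[nx lx].
  have fx : allexp (form j) x.
    have := nf_allexp nx => nx'.
    have := allexp_and nf (ltp (ofnat j.+1)) x; rewrite nx' lx /= => H.
    apply: allexp_impl H => e /andP[]; exact: ltp_form.
  have hy : allexp (fun e => (0 <= idx j e) && (idx j e < 0 + bnd j x) && form j e) x.
    have := allexp_and (fun e => idx j e < bnd j x) (form j) x.
    rewrite bnd_ok fx /= => H. apply: allexp_impl H => e /andP[-> ->] //.
  have [t [vt et]] := build IHj nx hy.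
  by exists t.
Qed.

Definition c2o c : option bool := match c with Eq => None | Lt => Some false | Gt => Some true end.

Definition ALE : automaton (option unit * option unit) :=
  @Automaton _ (option bool) None
    (fun lab l r => match lab with
                    | (Some _, Some _) => if r is None then l else r
                    | (Some _, None) => Some true
                    | (None, _) => Some false end)
    (fun q => q != Some true).

Lemma run_conv s t : run ALE (conv s t) = c2o (cmpT s t).
Proof.
elim: s t => [|u l IHl r IHr] [|u' l' r'] //=.
rewrite IHl IHr. by case: (cmpT r r').
Qed.

Section AU.
Variable k : nat.
Definition get (f : {ffun 'I_k.+1 -> bool}) (n : nat) := (n < k.+1) && f (inord n).

Lemma get_ffun (P : nat -> bool) n : n < k.+1 -> get [ffun i : 'I_k.+1 => P i] n = P n.
Proof. move=> h; by rewrite /get h ffunE inordK. Qed.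

Definition AU : automaton unit :=
  @Automaton _ (bool * {ffun 'I_k.+1 -> bool})%type (true, [ffun _ => true])
    (fun _ L R => (false, [ffun i : 'I_k.+1 => get R.2 i &&
        (if (i : nat) is i'.+1 then get L.2 i' && (R.1 ==> ~~ L.1) else L.1)]))
    (fun q => q.2 ord_max).

Lemma run_AU t : run AU t = (isLeaf t, [ffun i : 'I_k.+1 => valid t i]).
Proof.
elim: t => [|u l IHl r IHr] /=.
- congr pair; apply/ffunP => i; by rewrite !ffunE.
- rewrite IHl IHr /=. congr pair; apply/ffunP => i; rewrite !ffunE.
  rewrite get_ffun //. case: i => [[|m] hm] //=.
  rewrite get_ffun //. exact: ltnW.
Qed.

Lemma accepts_AU t : accepts AU t = valid t k.
Proof. by rewrite /accepts run_AU /= ffunE. Qed.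
End AU.

Lemma chain th x : nf x -> headlt x th -> allexp (fun e => ltb e th) x.
Proof.
elim: x => //= a _ n b IH /andP[/andP[_ nb] hb] ha. rewrite ha IH //.
case: b hb {IH nb} => //= a' n' b' /ltbP h. apply/ltbP; apply: cmp_trans h _. by apply/ltbP.
Qed.

Lemma Lv_of k x : nf x && ltb x (omega_omega_k k) -> Lv k x.
Proof.
move=> /andP[nx lx]. rewrite /Lv nx /=.
have := chain nx (_ : headlt x (omega_pow (ofnat k))). apply. by rewrite -ltpE.
Qed.

Lemma of_Lv k x : Lv k x -> nf x && ltb x (omega_omega_k k).
Proof.
move=> /andP[nx lx]. rewrite nx /=. change (ltp (omega_pow (ofnat k)) x). rewrite ltpE.
by case: x lx {nx} => //= a n b /andP[].
Qed.

Theorem lemma3p13 (k : nat) :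
  exists S : finType, #|S| = 1 /\
    tree_automatic_presentation S (@ord_le (omega_omega_k k)).
Proof.
exists unit; split; first by rewrite card_unit.
pose H (a : ord_below (omega_omega_k k)) := Lv_of (proj2_sig a).
pose mu (a : ord_below (omega_omega_k k)) :=
  proj1_sig (constructive_indefinite_description _ (sem_surj (H a))).
have muP : forall a, valid (mu a) k /\ sem k (mu a) = proj1_sig a.
  move=> a; exact: (proj2_sig (constructive_indefinite_description _ (sem_surj (H a)))).
exists (AU k), ALE, mu; split.
- move=> [x px] [y py] E. have [_ Ex] := muP (exist _ x px).
  have [_ Ey] := muP (exist _ y py). rewrite E Ey /= in Ex. subst y.
  by rewrite (bool_irrelevance px py).
- move=> a; rewrite accepts_AU; exact: (proj1 (muP a)).
- move=> t; rewrite accepts_AU => vt.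
  have [L _] := sem_ok vt.
  exists (exist _ (sem k t) (of_Lv L)).
  have [va ea] := muP (exist _ (sem k t) (of_Lv L)).
  apply: cmpT_eq. by rewrite -(sem_cmp va vt) ea /= cmp_refl.
- move=> a b. rewrite /accepts run_conv /ord_le.
  have [va ea] := muP a; have [vb eb] := muP b.
  rewrite -(sem_cmp va vb) ea eb /=.
  by case: (cmp _ _); split.
Qed.
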